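(* Let $\boldsymbol{x}_p=[i_p,v_p]^{\intercal}$ be the unique $T$-periodic solution of the switched system. Then $$\int_0^{T/2}i_p(t)\,dt=\frac{C}{V_{dc}}\bigl(v_p(T/2)^2-v_p(0)^2\bigr)=C\bigl(v_p(T/2)-v_p(0)\bigr),$$ and consequently $v_p(0)+v_p(T/2)=V_{dc}$.
   Context: Let $R,L,C,V_{dc},T>0$. Let $\boldsymbol{x}(t)=[i(t),v(t)]^{\intercal}$. Define $$A_1=\begin{bmatrix}-\frac RL & -\frac1L\\ \frac1C & 0\end{bmatrix},\quad A_2=\begin{bmatrix}-\frac RL & \frac1L\\ -\frac1C & 0\end{bmatrix},\quad \boldsymbol{b}_1=\begin{bmatrix}\frac{V_{dc}}L\\ 0\end{bmatrix}.$$ The switched system on $t\ge0$ is: $\boldsymbol{x}'=A_1\boldsymbol{x}+\boldsymbol{b}_1$ on each interval $[(k-1)T,(k-1)T+\frac T2]$ and $\boldsymbol{x}'=A_2\boldsymbol{x}$ on each interval $[(k-1)T+\frac T2,kT]$, $k=1,2,\dots$; solutions are continuous. The system has a unique $T$-periodic solution $\boldsymbol{x}_p$. *)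

(* Defs.v *)
From Stdlib Require Import Reals.
Open Scope R_scope.

Definition right_continuous_at (f : R -> R) (t0 : R) : Prop :=
  forall eps, 0 < eps -> exists delta, 0 < delta /\
    forall t, t0 <= t < t0 + delta -> Rabs (f t - f t0) < eps.

(* (i, v) is a solution on t >= 0 of the switched system
     x' = A1 x + b1  on [kT, kT + T/2],
     x' = A2 x       on [kT + T/2, (k+1)T],  k = 0,1,2,...
   with A1 = [[-R/L, -1/L],[1/C, 0]], A2 = [[-R/L, 1/L],[-1/C, 0]],
   b1 = [Vdc/L, 0], written componentwise. *)
Definition is_switched_solution (R0 L C Vdc T : R) (i v : R -> R) : Prop :=
  (right_continuous_at i 0 /\ right_continuous_at v 0) /\
  (forall t, 0 < t -> continuity_pt i t /\ continuity_pt v t) /\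
  (forall (k : nat) t,
      INR k * T < t < INR k * T + T / 2 ->
      derivable_pt_lim i t (- (R0 / L) * i t - (1 / L) * v t + Vdc / L) /\
      derivable_pt_lim v t ((1 / C) * i t)) /\
  (forall (k : nat) t,
      INR k * T + T / 2 < t < INR k * T + T ->
      derivable_pt_lim i t (- (R0 / L) * i t + (1 / L) * v t) /\
      derivable_pt_lim v t (- (1 / C) * i t)).

Definition is_T_periodic (T : R) (f : R -> R) : Prop :=
  forall t, 0 <= t -> f (t + T) = f t.

(* Main.v *)
Require Import Defs.
From Coquelicot Require Import Coquelicot.
From Stdlib Require Import Reals Lra.
Open Scope R_scope.

Lemma shift_lim f c x l : derivable_pt_lim f (x+c) l -> derivable_pt_lim (fun s => f (s+c)) x l.
Proof.
  intros H eps He; destruct (H eps He) as [d Hd]; exists d; intros h H1 H2.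
  replace (x+h+c) with (x+c+h) by ring. apply Hd; auto.
Qed.

Lemma cont_shift f c x : continuity_pt f (x+c) -> continuity_pt (fun s => f (s+c)) x.
Proof.
  intros H. change (continuity_pt (comp f (fun s => s + c)) x).
  apply continuity_pt_comp; [|exact H].
  apply derivable_continuous_pt. reg.
Qed.

Lemma decr f df a b : a < b -> (forall x, a<=x<=b -> continuity_pt f x) ->
  (forall x, a<x<b -> derivable_pt_lim f x (df x)) -> (forall x, a<x<b -> df x <= 0) -> f b <= f a.
Proof.
  intros Hab Hc Hd Hn.
  destruct (MVT f id a b (fun c P => exist _ (df c) (Hd c P)) (fun c _ => derivable_pt_id c) Hab Hc
     (fun c _ => derivable_continuous_pt _ _ (derivable_pt_id c))) as [c [P HP]].
  rewrite derive_pt_id in HP. simpl in HP. unfold id in HP.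
  specialize (Hn c P). nra.
Qed.

Lemma loc_deriv0 f x l a b : a < x < b -> (forall y, a < y < b -> f y = f x) ->
  derivable_pt_lim f x l -> l = 0.
Proof.
  intros Hx Hc Hd. apply is_derive_Reals in Hd.
  assert (H0 : is_derive f x 0).
  { apply is_derive_ext_loc with (f := fun _ => f x).
    - assert (Hp : 0 < Rmin (x - a) (b - x)) by (apply Rmin_pos; lra).
      exists (mkposreal _ Hp). intros y Hy. simpl in Hy.
      unfold ball in Hy; simpl in Hy; unfold AbsRing_ball, abs, minus, plus, opp in Hy; simpl in Hy.
      symmetry; apply Hc.
      pose proof (Rmin_l (x-a) (b-x)); pose proof (Rmin_r (x-a) (b-x)).
      apply Rabs_def2 in Hy. lra.
    - apply (is_derive_const (f x) x). }
  apply is_derive_unique in Hd. apply is_derive_unique in H0. congruence.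
Qed.

Lemma dE (L C : R) f g x lf lg : derivable_pt_lim f x lf -> derivable_pt_lim g x lg ->
  derivable_pt_lim (fun s => L*(f s*f s) + C*(g s * g s)) x (L*(2*f x*lf) + C*(2*g x*lg)).
Proof.
  intros Hf Hg.
  pose proof (derivable_pt_lim_plus _ _ x _ _
     (derivable_pt_lim_scal _ L x _ (derivable_pt_lim_mult _ _ x _ _ Hf Hf))
     (derivable_pt_lim_scal _ C x _ (derivable_pt_lim_mult _ _ x _ _ Hg Hg))) as H.
  unfold plus_fct, mult_real_fct, mult_fct in H.
  replace (L*(2*f x*lf) + C*(2*g x*lg)) with (L * (lf * f x + f x * lf) + C * (lg * g x + g x * lg)) by ring.
  exact H.
Qed.
Lemma sumVdc (R0 L C Vdc T : R) (ip vp : R -> R) :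
  0 < R0 -> 0 < L -> 0 < C -> 0 < Vdc -> 0 < T ->
  is_switched_solution R0 L C Vdc T ip vp ->
  is_T_periodic T ip -> is_T_periodic T vp ->
  vp 0 + vp (T / 2) = Vdc.
Proof.
  intros HR HL HC HV HT [_ [Hcont [Hph1 Hph2]]] Pi Pv.
  pose (a := fun s => ip s - ip (s + T/2)).
  pose (b := fun s => vp s - Vdc + vp (s + T/2)).
  pose (E := fun s => L*(a s*a s) + C*(b s*b s)).
  assert (Hda : forall s, T < s < T + T/2 -> derivable_pt_lim a s (-(R0/L)*a s - (1/L)*b s)).
  { intros s Hs. pose proof (Hph1 1%nat s) as H1. pose proof (Hph2 1%nat (s + T/2)) as H2.
    rewrite INR_1 in H1, H2.
    destruct (H1 ltac:(lra)) as [Hi1 _]. destruct (H2 ltac:(lra)) as [Hi2 _].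
    apply shift_lim in Hi2.
    pose proof (derivable_pt_lim_minus _ _ s _ _ Hi1 Hi2) as H. unfold minus_fct in H.
    unfold a, b. 
    match goal with |- derivable_pt_lim _ _ ?l => match type of H with derivable_pt_lim _ _ ?l' =>
      replace l with l' by (field; lra) end end. exact H. }
  assert (Hdb : forall s, T < s < T + T/2 -> derivable_pt_lim b s ((1/C)*a s)).
  { intros s Hs. pose proof (Hph1 1%nat s) as H1. pose proof (Hph2 1%nat (s + T/2)) as H2.
    rewrite INR_1 in H1, H2.
    destruct (H1 ltac:(lra)) as [_ Hi1]. destruct (H2 ltac:(lra)) as [_ Hi2].
    apply shift_lim in Hi2.
    pose proof (derivable_pt_lim_plus _ _ s _ _
       (derivable_pt_lim_minus _ _ s _ _ Hi1 (derivable_pt_lim_const Vdc s)) Hi2) as H.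
    unfold minus_fct, plus_fct in H.
    unfold a, b.
    match goal with |- derivable_pt_lim _ _ ?l => match type of H with derivable_pt_lim _ _ ?l' =>
      replace l with l' by (field; lra) end end. exact H. }
  assert (HdE : forall s, T < s < T + T/2 -> derivable_pt_lim E s (-2*R0*(a s*a s))).
  { intros s Hs. pose proof (dE L C a b s _ _ (Hda s Hs) (Hdb s Hs)) as H.
    unfold E. match type of H with derivable_pt_lim _ _ ?l' =>
      replace (-2*R0*(a s*a s)) with l' by (field; lra) end. exact H. }
  assert (Hca : forall s, T <= s -> continuity_pt a s).
  { intros s Hs. unfold a. apply continuity_pt_minus.
    - apply Hcont; lra.
    - apply cont_shift. apply Hcont; lra. }
  assert (Hcb : forall s, T <= s -> continuity_pt b s).
  { intros s Hs. unfold b. apply continuity_pt_plus. apply continuity_pt_minus.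
    - apply Hcont; lra.
    - apply continuity_pt_const. intros ? ?; reflexivity.
    - apply cont_shift. apply Hcont; lra. }
  assert (HcE : forall s, T <= s -> continuity_pt E s).
  { intros s Hs. unfold E. apply continuity_pt_plus; apply continuity_pt_scal;
    apply continuity_pt_mult; auto. }
  assert (Hend : E (T + T/2) = E T).
  { assert (e1 : forall f, is_T_periodic T f -> f (T + T/2) = f (T/2)).
    { intros f Pf. replace (T + T/2) with (T/2 + T) by ring. apply Pf; lra. }
    assert (e2 : forall f, is_T_periodic T f -> f (T + T/2 + T/2) = f 0).
    { intros f Pf. replace (T + T/2 + T/2) with (0 + T + T) by field.
      rewrite (Pf (0+T)) by lra. rewrite (Pf 0) by lra. reflexivity. }
    assert (e3 : forall f, is_T_periodic T f -> f T = f 0).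
    { intros f Pf. replace T with (0 + T) at 1 by ring. apply Pf; lra. }
    unfold E, a, b. rewrite !e1, !e2, !e3 by auto. ring. }
  assert (Hneg : forall s, T < s < T + T/2 -> -2*R0*(a s*a s) <= 0).
  { intros s _. assert (0 <= a s * a s) by nra. nra. }
  assert (Hconst : forall c, T < c < T + T/2 -> E c = E T).
  { intros c Hc. apply Rle_antisym.
    - apply (decr E (fun s => -2*R0*(a s*a s)) T c); try lra.
      + intros; apply HcE; lra.
      + intros; apply HdE; lra.
      + intros; apply Hneg; lra.
    - rewrite <- Hend.
      apply (decr E (fun s => -2*R0*(a s*a s)) c (T + T/2)); try lra.
      + intros; apply HcE; lra.
      + intros; apply HdE; lra.
      + intros; apply Hneg; lra. }
  assert (Ha0 : forall c, T < c < T + T/2 -> a c = 0).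
  { intros c Hc. 
    assert (-2*R0*(a c*a c) = 0).
    { apply (loc_deriv0 E c _ T (T+T/2)); auto.
      intros y Hy. rewrite (Hconst y Hy), (Hconst c Hc). reflexivity. }
    assert (a c * a c = 0).
    { apply Rmult_integral in H. destruct H as [H|H]; auto. lra. }
    apply Rmult_integral in H0. tauto. }
  pose (c := T + T/4).
  assert (Hcc : T < c < T + T/2) by (unfold c; lra).
  assert (Hb0 : b c = 0).
  { assert (-(R0/L)*a c - (1/L)*b c = 0).
    { apply (loc_deriv0 a c _ T (T+T/2)); auto.
      intros y Hy. rewrite (Ha0 y Hy), (Ha0 c Hcc). reflexivity. }
    rewrite (Ha0 c Hcc) in H.
    assert (Hb : b c = - L * (- (R0 / L) * 0 - 1 / L * b c)) by (field; lra).
    rewrite H in Hb. lra. }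
  assert (HE0 : E T = 0).
  { rewrite <- (Hconst c Hcc). unfold E. rewrite (Ha0 c Hcc), Hb0. ring. }
  unfold E in HE0.
  assert (0 <= a T * a T) by nra. assert (0 <= b T * b T) by nra.
  assert (b T * b T = 0) by nra.
  assert (b T = 0) by (apply Rmult_integral in H1; tauto).
  unfold b in H2.
  assert (vp T = vp 0) by (replace T with (0 + T) at 1 by ring; apply Pv; lra).
  assert (vp (T + T/2) = vp (T/2)) by (replace (T + T/2) with (T/2 + T) by ring; apply Pv; lra).
  lra.
Qed.
Lemma integ (R0 L C Vdc T : R) (ip vp : R -> R) :
  0 < R0 -> 0 < L -> 0 < C -> 0 < Vdc -> 0 < T ->
  is_switched_solution R0 L C Vdc T ip vp ->
  is_T_periodic T ip -> is_T_periodic T vp ->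
  exists pr : Riemann_integrable ip 0 (T / 2), RiemannInt pr = C * (vp (T / 2) - vp 0).
Proof.
  intros HR HL HC HV HT [_ [Hcont [Hph1 Hph2]]] Pi Pv.
  pose (g := fun t => ip (t + T)).
  assert (Hg : forall t, -T < t -> continuous g t).
  { intros t Ht. apply continuity_pt_filterlim. apply cont_shift. apply Hcont; lra. }
  assert (Hex : forall x, -T < x -> ex_RInt g 0 x).
  { intros x Hx. apply (@ex_RInt_continuous R_CompleteNormedModule). intros z Hz. apply Hg.
    pose proof (Rmin_l 0 x); pose proof (Rmin_r 0 x).
    destruct (Rle_dec 0 x); [rewrite Rmin_left in Hz|rewrite Rmin_right in Hz]; lra. }
  assert (Hloc : forall x, -T < x -> locally x (fun b0 => is_RInt g 0 b0 (RInt g 0 b0))).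
  { intros x Hx. assert (Hp : 0 < x + T) by lra. exists (mkposreal _ Hp).
    intros y Hy. unfold ball in Hy; simpl in Hy; unfold AbsRing_ball, abs, minus, plus, opp in Hy; simpl in Hy.
    apply Rabs_def2 in Hy. apply (@RInt_correct R_CompleteNormedModule). apply Hex. lra. }
  pose (P := fun x => RInt g 0 x - C * vp (x + T)).
  assert (HdP : forall x, 0 < x < T/2 -> derivable_pt_lim P x 0).
  { intros x Hx.
    assert (H1 : derivable_pt_lim (RInt g 0) x (g x)).
    { apply is_derive_Reals. apply is_derive_RInt with (a := 0). apply Hloc; lra. apply Hg; lra. }
    pose proof (Hph1 1%nat (x + T)) as H2. rewrite INR_1 in H2.
    destruct (H2 ltac:(lra)) as [_ H3]. apply shift_lim in H3.
    pose proof (derivable_pt_lim_minus _ _ x _ _ H1 (derivable_pt_lim_scal _ C x _ H3)) as H.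
    unfold minus_fct, mult_real_fct in H. unfold P.
    replace (g x - C * (1 / C * ip (x + T))) with 0 in H by (unfold g; field; lra). exact H. }
  assert (HcP : forall x, 0 <= x <= T/2 -> continuity_pt P x).
  { intros x Hx. unfold P. apply continuity_pt_minus.
    - apply continuity_pt_filterlim. apply (@continuous_RInt_1 R_NormedModule g 0). apply Hloc; lra.
    - apply continuity_pt_scal. apply cont_shift. apply Hcont; lra. }
  pose proof (null_derivative_loc P 0 (T/2) (fun x Hx => exist _ 0 (HdP x Hx)) HcP
     (fun x Hx => eq_refl)) as Hc.
  specialize (Hc (T/2) ltac:(lra)). unfold P in Hc. rewrite RInt_point in Hc.
  assert (Heq : forall x, Rmin 0 (T/2) < x < Rmax 0 (T/2) -> g x = ip x).
  { intros x Hx. unfold g. apply Pi. rewrite Rmin_left in Hx; lra. }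
  assert (Hexi : ex_RInt ip 0 (T/2)) by (apply ex_RInt_ext with g; [exact Heq| apply Hex; lra]).
  exists (ex_RInt_Reals_0 _ _ _ Hexi).
  rewrite <- RInt_Reals. rewrite <- (RInt_ext g ip 0 (T/2) Heq).
  assert (vp (0 + T) = vp 0) by (apply Pv; lra).
  assert (vp (T/2 + T) = vp (T/2)) by (apply Pv; lra).
  rewrite H, H0 in Hc. unfold zero in Hc; simpl in Hc. lra.
Qed.

Theorem mainTheorem5 (R0 L C Vdc T : R) (ip vp : R -> R) :
  0 < R0 -> 0 < L -> 0 < C -> 0 < Vdc -> 0 < T ->
  is_switched_solution R0 L C Vdc T ip vp ->
  is_T_periodic T ip -> is_T_periodic T vp ->
  (exists pr : Riemann_integrable ip 0 (T / 2),
      RiemannInt pr = C / Vdc * (vp (T / 2) ^ 2 - vp 0 ^ 2) /\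
      RiemannInt pr = C * (vp (T / 2) - vp 0)) /\
  vp 0 + vp (T / 2) = Vdc.
Proof.
  intros HR HL HC HV HT Hs Pi Pv.
  pose proof (sumVdc R0 L C Vdc T ip vp HR HL HC HV HT Hs Pi Pv) as Hsum.
  destruct (integ R0 L C Vdc T ip vp HR HL HC HV HT Hs Pi Pv) as [pr Hpr].
  split; [|exact Hsum]. exists pr. split; [|exact Hpr].
  rewrite Hpr. replace (vp (T/2) ^ 2 - vp 0 ^ 2) with ((vp (T/2) - vp 0) * (vp 0 + vp (T/2))) by ring.
  rewrite Hsum. field. lra.
Qed.
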